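(* For every positive integer $n$ there exists an addition chain producing $2^n-1$ whose length $\delta(2^n-1)$ satisfies $$\delta(2^n-1)\leq 2n-1-\left\lfloor \frac{n-1}{2^{\lfloor \frac{\log n}{\log 2}\rfloor}}\right\rfloor-\left\lfloor \frac{\log n}{\log 2}\right\rfloor+\iota(n).$$
   Context: An addition chain producing $N$ is a sequence $1,2,s_3,\ldots,s_k=N$ in which every term after the first is the sum of two (not necessarily distinct) earlier terms; its length is the number of terms excluding the initial $1$. $\iota(N)$ denotes the length of the shortest addition chain producing $N$. $\lfloor\cdot\rfloor$ is the floor function and $\log$ the natural logarithm. *)

(* Defs.v *)
From mathcomp Require Import all_boot all_order all_algebra.
Set Implicit Arguments. Unset Strict Implicit. Unset Printing Implicit Defensive.

(* An addition chain is represented by the list c of its terms after the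
   initial 1, i.e. the full chain is s = 1 :: c.  Its length is size c. *)
Definition is_addition_chain (c : seq nat) : bool :=
  let s := 1 :: c in
  all (fun i => has (fun j => has (fun k => nth 0 s i == nth 0 s j + nth 0 s k)
                                  (iota 0 i))
                    (iota 0 i))
      (iota 1 (size c)).

Definition chain_producing (N : nat) (c : seq nat) : bool :=
  is_addition_chain c && (last 1 c == N).

Definition is_shortest_chain_length (N l : nat) : Prop :=
  (exists c, chain_producing N c /\ size c = l) /\
  (forall c, chain_producing N c -> l <= size c).

(* Main.v *)
Require Import Defs.
From mathcomp Require Import all_boot all_order all_algebra.
From mathcomp Require Import zify.
Import GRing.Theory Num.Theory.

Lemma chain_rcons (c : seq nat) x a b :
  is_addition_chain c -> a \in 1 :: c -> b \in 1 :: c -> x = a + b ->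
  is_addition_chain (rcons c x).
Proof.
move=> hc ha hb ->.
have Enth : forall j, j < (size c).+1 ->
   nth 0 (1 :: rcons c (a + b)) j = nth 0 (1 :: c) j.
  by move=> j hj; rewrite -rcons_cons nth_rcons /= hj.
rewrite /is_addition_chain size_rcons -[(size c).+1]addn1 iotaD all_cat.
apply/andP; split.
  move: hc; rewrite /is_addition_chain.
  congr (is_true _); apply: eq_in_all => i; rewrite mem_iota => /andP [_ hi].
  apply: eq_in_has => j; rewrite mem_iota => /andP [_ hj].
  apply: eq_in_has => k; rewrite mem_iota => /andP [_ hk].
  rewrite !Enth //; lia.
rewrite add1n [iota _ 1]/= all_seq1; apply/hasP; exists (index a (1 :: c)).
  by rewrite mem_iota add0n; have := index_mem a (1 :: c); rewrite ha.
apply/hasP; exists (index b (1 :: c)).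
  by rewrite mem_iota add0n; have := index_mem b (1 :: c); rewrite hb.
rewrite [X in X == _]/= nth_rcons ltnn eqxx.
have ia := index_mem a (1 :: c); rewrite ha in ia.
have ib := index_mem b (1 :: c); rewrite hb in ib.
by rewrite !Enth // !nth_index.
Qed.

Fixpoint bin (m : nat) : seq nat :=
  match m with
  | 0 => [::]
  | m'.+1 => let y := last 1 (bin m') in rcons (rcons (bin m') (y + y)) (y + y + 1)
  end.

Lemma bin_spec m : is_addition_chain (bin m) /\ last 1 (bin m) = 2 ^ m.+1 - 1
  /\ size (bin m) = m.*2.
Proof.
elim: m => [|m [IH1 [IH2 IH3]]] //=.
split; last split.
- apply: (@chain_rcons _ _ (last 1 (bin m) + last 1 (bin m)) 1).
  + apply: chain_rcons => //; apply: mem_last.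
  + by rewrite -rcons_cons mem_rcons mem_head.
  + by rewrite mem_head.
  + by [].
- rewrite !last_rcons IH2 (expnS 2 m.+1).
  have : 0 < 2 ^ m.+1 by rewrite expn_gt0.
  lia.
- by rewrite !size_rcons IH3 doubleS.
Qed.

Lemma chain_bound c : is_addition_chain c -> forall i, i <= size c ->
  nth 0 (1 :: c) i <= 2 ^ i.
Proof.
move=> hc i; elim: i {-2}i (leqnn i) => [|N IH] i hi hs.
  by move: hi; rewrite leqn0 => /eqP ->.
case: i hi hs => [|i] hi hs; first by [].
have : i.+1 \in iota 1 (size c) by rewrite mem_iota; lia.
move/(allP hc) => /hasP [j]; rewrite mem_iota => /andP [_ hj].
move=> /hasP [k]; rewrite mem_iota => /andP [_ hk] /eqP ->.
have h1 := IH j ltac:(lia) ltac:(lia).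
have h2 := IH k ltac:(lia) ltac:(lia).
have h3 : 2 ^ j <= 2 ^ i by apply: leq_pexp2l; lia.
have h4 : 2 ^ k <= 2 ^ i by apply: leq_pexp2l; lia.
rewrite expnS; lia.
Qed.

Local Open Scope ring_scope.

Theorem mainTheorem11 (n : nat) (hn : (0 < n)%N) (iota_n : nat)
    (hiota : is_shortest_chain_length n iota_n) :
  exists c : seq nat,
    chain_producing (2 ^ n - 1) c /\
    ((size c)%:Z <= (2 * n)%:Z - 1
                    - ((n - 1) %/ 2 ^ trunc_log 2 n)%N%:Z
                    - (trunc_log 2 n)%:Z + iota_n%:Z).
Proof.
case: n hn hiota => [|m] // _ hiota.
have [h1 [h2 h3]] := bin_spec m.
exists (bin m); split; first by rewrite /chain_producing h1 h2 eqxx.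
case: hiota => [[c0 [/andP [hc0 /eqP hl] hs]] _].
have hb : (m.+1 <= 2 ^ iota_n)%N.
  have := @chain_bound c0 hc0 _ (leqnn (size c0)).
  have e := nth_last 0 (1 :: c0); rewrite /= in e.
  by rewrite e hl hs.
set k := trunc_log 2 m.+1.
have hk1 : (2 ^ k <= m.+1)%N by apply: trunc_logP.
have hk2 : (m.+1 < 2 ^ k.+1)%N by apply: trunc_log_ltn.
have hki : (k <= iota_n)%N.
  by rewrite -(leq_exp2l _ _ (isT : (1 < 2)%N)); apply: leq_trans hk1 hb.
have hq : ((m.+1 - 1) %/ 2 ^ k < 2)%N.
  rewrite ltn_divLR ?expn_gt0 //; move: hk2; rewrite expnS; lia.
rewrite h3; lia.
Qed.
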